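(* Let $G$ be a group, $\mathbb{F}$ a field, and $\mathsf{a},\mathsf{b}\in\mathbb{F}[G]$ with $|supp(\mathsf{a})|=n$ and $\mathsf{a}\mathsf{b}=1$. Then every vertex of $U(\mathsf{a},\mathsf{b})$ has degree in $\{n-1,n,\dots,n(n-1)\}$. Moreover, $U(\mathsf{a},\mathsf{b})$ has at most one vertex of degree $n-1$.
   Context: $supp(\gamma)=\{x\in G:\gamma_x\ne0\}$. The unit graph $U(\mathsf{a},\mathsf{b})$ (for $\mathsf{a}\mathsf{b}=1$) is the multigraph with vertex set $supp(\mathsf{b})$ whose edges are the sets $\{(h,h',g,g'),(h',h,g',g)\}$ with $h,h'\in supp(\mathsf{a})$, $g,g'\in supp(\mathsf{b})$, $g\ne g'$, $hg=h'g'$; such an edge joins $g$ and $g'$. The degree of a vertex is the number of edges incident to it. *)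

(* Defs.v *)
From HB Require Import structures.
From mathcomp Require Import all_boot all_algebra monoid.
From mathcomp Require Import finmap.

Set Implicit Arguments.
Unset Strict Implicit.
Unset Printing Implicit Defensive.

Local Open Scope fset_scope.

Section UnitGraph.
Variables (G : groupType) (F : fieldType).

Definition grpalg := {fsfun G -> F with 0%R}.

Definition supp (x : grpalg) : {fset G} := finsupp x.

Definition gconv (a b : grpalg) (x : G) : F :=
  (\sum_(h <- supp a) \sum_(k <- supp b | monoid.mul h k == x) a h * b k)%R.

Definition galg1 (x : G) : F := if x == monoid.one then 1%R else 0%R.

Definition galg_inverse (a b : grpalg) : Prop := forall x, gconv a b x = galg1 x.

Definition ugquads (a b : grpalg) : seq (G * G * G * G) :=
  [seq q <- [seq (hh.1, hh.2, gg.1, gg.2)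
          | hh <- [seq (h, h') | h <- enum_fset (supp a), h' <- enum_fset (supp a)],
            gg <- [seq (g, g') | g <- enum_fset (supp b), g' <- enum_fset (supp b)]]
   | (q.1.2 != q.2) && (monoid.mul q.1.1.1 q.1.2 == monoid.mul q.1.1.2 q.2)].

Definition swapq (q : G * G * G * G) : G * G * G * G :=
  (q.1.1.2, q.1.1.1, q.2, q.1.2).

(* edges of U(a,b): the sets {(h,h',g,g'), (h',h,g',g)} *)
Definition ugedges (a b : grpalg) : {fset {fset (G * G * G * G)}} :=
  [fset [fset q; swapq q] | q in ugquads a b].

(* an edge containing (h,h',g,g') joins g and g'; E is incident to v *)
Definition incident (E : {fset (G * G * G * G)}) (v : G) : bool :=
  has (fun q => (q.1.2 == v) || (q.2 == v)) (enum_fset E).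

(* degree of a vertex v of U(a,b) (vertex set supp b) *)
Definition ugdeg (a b : grpalg) (v : G) : nat :=
  #|` [fset E in ugedges a b | incident E v] |.

End UnitGraph.

(* Main.v *)
Require Import Defs.
From HB Require Import structures.
From mathcomp Require Import all_boot all_algebra monoid.
From mathcomp Require Import finmap.
Local Open Scope fset_scope.
Section S.
Variables (G : groupType) (F : fieldType) (a b : grpalg G F).
Lemma mem_ugquads (q : G * G * G * G) :
  (q \in ugquads a b) = [&& q.1.1.1 \in supp a, q.1.1.2 \in supp a, q.1.2 \in supp b,
     q.2 \in supp b, q.1.2 != q.2 & mul q.1.1.1 q.1.2 == mul q.1.1.2 q.2].
Proof.
case: q => [[[h h'] g] g'] /=.
rewrite /ugquads mem_filter /=.
apply/andP/idP.
  case=> /andP[ne e] /allpairsP[[[x y] [z w]] /= [/allpairsP[[x' y'] /= [hx hy [? ?]]]]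
     /allpairsP[[z' w'] /= [hz hw [? ?]]] []]; subst.
  by move=> ? ? ? ?; subst; rewrite hx hy hz hw ne e.
case/and5P=> ha ha' hb hb' /andP[ne e]; split; first by rewrite ne e.
apply/allpairsP; exists ((h, h'), (g, g')) => /=; split => //.
  by apply/allpairsP; exists (h, h').
by apply/allpairsP; exists (g, g').
Qed.

Definition hasq (h v : G) := has (fun q : G * G * G * G => (q.1.1.1 == h) && (q.1.2 == v)) (ugquads a b).

Lemma partner h v : galg_inverse a b -> h \in supp a -> v \in supp b ->
  h != inv v -> hasq h v.
Proof.
move=> ab ha vb hv; apply/negPn/negP => nh.
have ah : a h != 0%R by move: ha; rewrite /supp mem_finsupp.
have bv : b v != 0%R by move: vb; rewrite /supp mem_finsupp.
have := ab (mul h v); rewrite /galg1 mulg_eq1 (negbTE hv).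
rewrite /gconv (bigD1_seq h) //= ?fset_uniq //.
rewrite [X in (_ + X)%R]big1_seq ?GRing.addr0; last first.
  move=> h1 /andP[ne1 h1a]; apply: big1_seq => k /andP[/eqP e kb].
  case: (eqVneq k v) => [kv|kv].
    by subst k; move/mulIg: e => e; move: ne1; rewrite e eqxx.
  case/negP: nh; apply/hasP; exists (h, h1, v, k) => //=; last by rewrite !eqxx.
  by rewrite mem_ugquads /= ha h1a vb kb eq_sym kv e eqxx.
rewrite big_mkcond (bigD1_seq v) //= ?fset_uniq // eqxx.
rewrite big1_seq ?GRing.addr0; last first.
  move=> k /andP[kv kb]; case: ifP => // /eqP /mulgI e.
  by move: kv; rewrite e eqxx.
by move/eqP; rewrite (negbTE (GRing.mulf_neq0 ah bv)).
Qed.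

Lemma swapq_quad q : q \in ugquads a b -> swapq q \in ugquads a b.
Proof.
case: q => [[[h h'] g] g']; rewrite !mem_ugquads /=.
by case/and5P=> -> -> -> -> /andP[ne /eqP e]; rewrite eq_sym ne e eqxx.
Qed.

Lemma swapqK (q : G * G * G * G) : swapq (swapq q) = q.
Proof. by case: q => [[[h h'] g] g']. Qed.

Definition theta (v : G) (E : {fset (G * G * G * G)}) : G :=
  (nth (v, v, v, v) E (find (fun q : G * G * G * G => q.1.2 == v) E)).1.1.1.

Lemma lower v (T : {fset G}) : (forall h, h \in T -> hasq h v) ->
  (#|` T| <= ugdeg a b v)%N.
Proof.
move=> hT.
set I := [fset E in ugedges a b | incident E v].
have sub : (T `<=` [fset x | x in map (theta v) I])%fset.
  apply/fsubsetP => h /hT /hasP [q qQ /andP[/eqP qh /eqP qv]].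
  rewrite inE; apply/mapP; exists [fset q; swapq q].
    rewrite !inE; apply/andP; split.
      by apply/imfsetP; exists q.
    by rewrite /incident; apply/hasP; exists q; [rewrite in_fset2 eqxx | rewrite qv eqxx].
  rewrite /theta.
  set P := (fun q0 : G * G * G * G => q0.1.2 == v).
  have hP : has P [fset q; swapq q] by apply/hasP; exists q; rewrite ?in_fset2 ?eqxx //; rewrite /P qv.
  have := nth_find (v, v, v, v) hP.
  have := mem_nth (v, v, v, v) (etrans (esym (has_find P _)) hP).
  set x := nth _ _ _ => xin Px.
  move: xin; rewrite in_fset2 => /orP[/eqP -> //|/eqP xs].
  move: Px; rewrite /P xs /=.
  move: qQ; rewrite mem_ugquads => /and5P[_ _ _ _ /andP[ne _]].
  by rewrite -qv eq_sym (negbTE ne).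
apply: leq_trans (fsubset_leq_card sub) _.
by rewrite card_fseq (leq_trans (size_undup _)) // size_map.
Qed.

Definition Pairs := [seq (h, h') | h <- enum_fset (supp a), h' <- rem h (enum_fset (supp a))].
Definition psi (v : G) (p : G * G) : {fset (G * G * G * G)} :=
  [fset (p.1, p.2, v, mul (inv p.2) (mul p.1 v)); swapq (p.1, p.2, v, mul (inv p.2) (mul p.1 v))].

Lemma edge_of v q : q \in ugquads a b -> q.1.2 = v ->
  [fset q; swapq q] \in map (psi v) Pairs.
Proof.
case: q => [[[h h'] g] g'] /=; rewrite mem_ugquads /= => /and5P[ha ha' gb g'b /andP[ne /eqP e]] gv.
subst g.
have eg' : g' = mul (inv h') (mul h v) by rewrite e mulKg.
apply/mapP; exists (h, h'); last by rewrite /psi /= -eg'.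
rewrite /Pairs; apply: (@allpairs_f_dep _ (fun=> G) _ (fun x y => (x, y))) => //.
rewrite mem_rem_uniq ?fset_uniq // inE ha' andbT.
apply/eqP => hh; subst h'; move/mulgI: e => e; by rewrite e eqxx in ne.
Qed.

Lemma size_Pairs n : #|` supp a| = n -> size Pairs = (n * (n - 1))%N.
Proof.
move=> cn; rewrite /Pairs size_allpairs_dep.
have -> : [seq size (rem h (enum_fset (supp a))) | h <- enum_fset (supp a)] =
   map (fun=> (n - 1)%N) (enum_fset (supp a)).
  apply/eq_in_map => h hS /=; rewrite size_rem // -cn; exact: (esym (subn1 _)).
have sc (c : nat) (s : seq G) : sumn (map (fun=> c) s) = (size s * c)%N.
  by elim: s => //= x s ->; rewrite mulSn.
by rewrite sc cn.
Qed.

Lemma upper v n : #|` supp a| = n -> (ugdeg a b v <= n * (n - 1))%N.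
Proof.
move=> cn.
set I := [fset E in ugedges a b | incident E v].
have sub : (I `<=` [fset x | x in map (psi v) Pairs])%fset.
  apply/fsubsetP => E; rewrite !inE => /andP[/imfsetP [q /= qQ ->] /hasP [x]].
  have qQ' := swapq_quad _ qQ.
  rewrite in_fset2 => /orP[] /eqP -> /orP[] /eqP xv.
  - exact: edge_of.
  - by rewrite fsetUC -{2}(swapqK q); apply: edge_of.
  - by rewrite fsetUC -{2}(swapqK q); apply: edge_of.
  - exact: edge_of.
apply: leq_trans (fsubset_leq_card sub) _.
by rewrite card_fseq (leq_trans (size_undup _)) // size_map (size_Pairs n cn).
Qed.

End S.

Theorem mainTheorem9 (G : groupType) (F : fieldType) (a b : grpalg G F) (n : nat) :
  #|` supp a| = n ->
  galg_inverse a b ->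
  (forall v, v \in supp b -> (n - 1 <= ugdeg a b v <= n * (n - 1))%N) /\
  (forall v w, v \in supp b -> w \in supp b ->
     ugdeg a b v = (n - 1)%N -> ugdeg a b w = (n - 1)%N -> v = w).
Proof.
move=> cn ab.
have n0 : (0 < n)%N.
  rewrite -cn cardfs_gt0; apply/negP => /eqP S0.
  have := ab one; rewrite /gconv S0 big_seq_fset0 /galg1 eqxx => /eqP.
  by rewrite eq_sym GRing.oner_eq0.
split.
  move=> v vb; apply/andP; split; last exact: upper.
  have := cardfsD1 (inv v) (supp a); rewrite cn => ->.
  apply: (leq_trans _ (@lower G F a b v (supp a `\ inv v)%fset _)).
    by rewrite leq_subLR leq_add2r leq_b1.
  move=> h; rewrite in_fsetD1 => /andP[hv hS]; exact: partner.
have key v : v \in supp b -> ugdeg a b v = (n - 1)%N ->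
    inv v \in supp a /\ ~~ @hasq G F a b (inv v) v.
  move=> vb dv.
  case: (boolP (has (fun h => ~~ @hasq G F a b h v) (supp a))) => [/hasP [h hS nh]|].
    case: (eqVneq h (inv v)) => [e|ne]; first by subst h.
    by rewrite (@partner G F a b h v ab hS vb ne) in nh.
  move/hasPn => all.
  have := @lower G F a b v (supp a) (fun h hS => negbNE (all h hS)).
  by rewrite cn dv; case: n n0 {cn dv} => // m _; rewrite subn1 /= ltnn.
move=> v w vb wb dv dw.
have [vS nv] := key v vb dv.
have [wS nw] := key w wb dw.
apply/eqP; apply/negPn/negP => ne.
case/negP: nv; apply/hasP; exists (inv v, inv w, v, w); last by rewrite /= !eqxx.
by rewrite mem_ugquads /= vS wS vb wb ne !mulVg eqxx.
Qed.
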